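(* Let $w=a_{u_1^1}\cdots a_{u_n^r}|b_{v_1^1}\cdots b_{v_n^r}\in W^*(d,2m;\mathbb T)$. Then [$\phi(w)$ is an $r$-configuration of $U$ and $V$ and $\Phi(\phi(w))=w$] if and only if $w$ satisfies Condition (C).
   Context: $n,r,d\ge1$, $m=rn$. $U=\{u_1\prec\cdots\prec u_n\}$, $V=\{v_1\prec\cdots\prec v_n\}$; $\overline U=U\times[r]$, $\overline V=V\times[r]$ ordered lexicographically (write $u^s$ for $(u,s)$). An $r$-configuration is a bijection between $\overline U$ and $\overline V$; a quasi configuration is a partial matching. Pairs $(\bar u,\bar v),(\bar u',\bar v')$ are noncrossing if ($\bar u\prec\bar u'$ and $\bar v\prec\bar v'$) or ($\bar u'\prec\bar u$ and $\bar v'\prec\bar v$). Walks $w=a_{u_1^1}\cdots a_{u_n^r}|b_{v_1^1}\cdots b_{v_n^r}$, $a_{\bar u},b_{\bar v}\in[d]$, denote walks in $\mathbb Z^d$ from the origin with steps $e_{a_{\bar u}}$ ($\bar u$ increasing) then $-e_{b_{\bar v}}$ ($\bar v$ increasing). For a permutation $\pi$ of $[d]$, $T(\pi)=(1-\pi(1),\dots,d-\pi(d))$; $\mathbb T$ is the set of all $T(\pi)$; $W^*(d,2m;\mathbb T)$ is the set of such walks ending in $\mathbb T$. For an $r$-configuration $F$: $a_{\bar u}$ is the maximum size of a set of pairwise noncrossing pairs of $F$ containing the pair $(\bar u,\bar v')\in F$, all of whose pairs $(x,y)$ satisfy $x\preceq\bar u$, $y\preceq\bar v'$; $b_{\bar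 v}$ symmetrically; $\Phi(F)=a_{u_1^1}\cdots a_{u_n^r}|b_{v_1^1}\cdots b_{v_n^r}$. $A_k(w)=\{\bar u:a_{\bar u}=k\}$, $B_k(w)=\{\bar v:b_{\bar v}=k\}$; connecting equal-size ordered sets $A,B$ in a crossing way: pair the $i$-th smallest of $A$ with the $i$-th largest of $B$; $\phi(w)$: for each $k$, if $|A_k(w)|\ge|B_k(w)|$ connect the $|B_k(w)|$ smallest elements of $A_k(w)$ with $B_k(w)$ in a crossing way, else connect $A_k(w)$ with the $|A_k(w)|$ largest elements of $B_k(w)$ in a crossing way. For $\bar u\in\overline U$, $k(\bar u)=|\{\bar u'\preceq\bar u: a_{\bar u'}=a_{\bar u}\}|$ and $l(\bar u)=|\{\bar u'\preceq\bar u: a_{\bar u'}=a_{\bar u}-1\}|$. Condition (C): for every $\bar u$ with $a_{\bar u}>1$, we have $l(\bar u)>0$, the negative step sequence $b_{v_1^1}\cdots b_{v_n^r}$ contains at least $l(\bar u)$ occurrences of $a_{\bar u}-1$ and at least $k(\bar u)$ occurrences of $a_{\bar u}$, and the $l(\bar u)$-th-to-last occurrence of $a_{\bar u}-1$ in it comes before the $k(\bar u)$-th-to-last occurrence of $a_{\bar u}$ in it. *)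

(* Defs.v *)
From mathcomp Require Import all_boot all_order all_algebra.
From mathcomp Require Import perm.
Set Implicit Arguments. Unset Strict Implicit. Unset Printing Implicit Defensive.

(* \overline U = U x [r] (and likewise \overline V), with U = {u_1 < ... < u_n}
   encoded as 'I_n and [r] as 'I_r; ordered lexicographically. *)
Definition idx (n r : nat) : finType := ('I_n * 'I_r)%type.

Section Defs.
Variables n r d : nat.
Local Notation I := (idx n r).

Definition ltI (x y : I) : bool :=
  (x.1 < y.1)%N || ((x.1 == y.1) && (x.2 < y.2)%N).
Definition leI (x y : I) : bool := (x == y) || ltI x y.

Definition is_rconfig (F : {set I * I}) : Prop :=
  (forall x : I, #|[set y : I | (x, y) \in F]| = 1%N) /\
  (forall y : I, #|[set x : I | (x, y) \in F]| = 1%N).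

Definition noncrossing (p q : I * I) : bool :=
  (ltI p.1 q.1 && ltI p.2 q.2) || (ltI q.1 p.1 && ltI q.2 p.2).

Definition nc_chain (F : {set I * I}) (u v : I) (S : {set I * I}) : bool :=
  [&& S \subset F, (u, v) \in S,
      [forall p in S, forall q in S, (p != q) ==> noncrossing p q] &
      [forall p in S, leI p.1 u && leI p.2 v]].

Definition Phi_a (F : {set I * I}) (u : I) : nat :=
  \max_(v : I | (u, v) \in F) \max_(S : {set I * I} | nc_chain F u v S) #|S|.
Definition Phi_b (F : {set I * I}) (v : I) : nat :=
  \max_(u : I | (u, v) \in F) \max_(S : {set I * I} | nc_chain F u v S) #|S|.

(* walks w = a | b in W^*(d, 2m; T) : steps in [d] = {1..d}, endpoint
   (sum_ubar e_{a_ubar} - sum_vbar e_{b_vbar}) equal to T(pi) for a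
   permutation pi of [d]; [d] is encoded by 'I_d via k |-> k+1. *)
Definition in_Wstar (a b : I -> nat) : Prop :=
  (forall x, 0 < a x <= d)%N /\ (forall y, 0 < b y <= d)%N /\
  exists pi : {perm 'I_d}, forall k : 'I_d,
    ((#|[set x | a x == k.+1]|%:Z - #|[set y | b y == k.+1]|%:Z)
      = (k.+1)%:Z - (pi k).+1%:Z)%R.

Definition A_ (a : I -> nat) (k : nat) : {set I} := [set x | a x == k].
Definition B_ (b : I -> nat) (k : nat) : {set I} := [set y | b y == k].

Definition rank_low (A : {set I}) (x : I) : nat := #|[set x' in A | ltI x' x]|.
Definition rank_high (B : {set I}) (y : I) : nat := #|[set y' in B | ltI y y']|.

Definition smallest (k : nat) (A : {set I}) : {set I} :=
  [set x in A | rank_low A x < k]%N.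
Definition largest (k : nat) (B : {set I}) : {set I} :=
  [set y in B | rank_high B y < k]%N.

Definition connect_crossing (A B : {set I}) : {set I * I} :=
  [set p | [&& p.1 \in A, p.2 \in B & rank_low A p.1 == rank_high B p.2]].

Definition phi (a b : I -> nat) : {set I * I} :=
  \bigcup_(k < d.+1)
    (if #|B_ b k| <= #|A_ a k| then
       connect_crossing (smallest #|B_ b k| (A_ a k)) (B_ b k)
     else connect_crossing (A_ a k) (largest #|A_ a k| (B_ b k)))%N.

Definition kk (a : I -> nat) (u : I) : nat := #|[set u' | leI u' u & a u' == a u]|.
Definition ll (a : I -> nat) (u : I) : nat := #|[set u' | leI u' u & a u' == (a u).-1]|.

Definition jth_to_last (b : I -> nat) (c j : nat) (y : I) : bool :=
  (b y == c) && (#|[set y' | leI y y' & b y' == c]| == j).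

Definition condC (a b : I -> nat) : Prop :=
  forall u : I, (1 < a u)%N ->
    [/\ (0 < ll a u)%N,
        (ll a u <= #|B_ b (a u).-1|)%N,
        (kk a u <= #|B_ b (a u)|)%N &
        exists y1 y2 : I, [&& jth_to_last b (a u).-1 (ll a u) y1,
                              jth_to_last b (a u) (kk a u) y2 & ltI y1 y2]].
End Defs.

(* Main.v *)
Require Import Defs.
From mathcomp Require Import all_boot all_order all_algebra.
From mathcomp Require Import perm zify.
Set Implicit Arguments. Unset Strict Implicit. Unset Printing Implicit Defensive.
Set Bullet Behavior "Strict Subproofs".

Section Rank.
Variables (T : finType) (lt : rel T).
Hypothesis ltirr : forall x, ~~ lt x x.
Hypothesis lttr : forall x y z, lt x y -> lt y z -> lt x z.
Hypothesis lttot : forall x y, x != y -> lt x y || lt y x.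

Definition rk (A : {set T}) (x : T) : nat := #|[set x' in A | lt x' x]|.

Lemma lt_asym x y : lt x y -> ~~ lt y x.
Proof. move=> h; apply/negP=> h2; by have := ltirr x; rewrite (lttr h h2). Qed.

Lemma rk_mono (A : {set T}) x x' : x \in A -> lt x x' -> rk A x < rk A x'.
Proof.
move=> xA lx; apply: proper_card; apply/properP; split.
  apply/subsetP=> z; rewrite !inE => /andP[-> h] /=; exact: lttr h lx.
exists x; first by rewrite !inE xA lx.
by rewrite !inE (negbTE (ltirr x)) andbF.
Qed.

Lemma rk_le (A : {set T}) x x' : (x == x') || lt x x' -> rk A x <= rk A x'.
Proof.
case/orP=> [/eqP->//|lx]; apply: subset_leq_card.
apply/subsetP=> z; rewrite !inE => /andP[-> h] /=; exact: lttr h lx.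
Qed.

Lemma rk_inj (A : {set T}) x x' : x \in A -> x' \in A -> rk A x = rk A x' -> x = x'.
Proof.
move=> xA x'A e; apply/eqP; apply/negPn/negP => ne.
case/orP: (lttot ne) => h.
  by have := rk_mono xA h; rewrite e ltnn.
by have := rk_mono x'A h; rewrite e ltnn.
Qed.

Lemma rk_lt (A : {set T}) x : x \in A -> rk A x < #|A|.
Proof.
move=> xA; apply: proper_card; apply/properP; split.
  by apply/subsetP=> z; rewrite !inE => /andP[].
by exists x => //; rewrite !inE (negbTE (ltirr x)) andbF.
Qed.

Lemma rk_surj (A : {set T}) i : i < #|A| -> exists2 x, x \in A & rk A x = i.
Proof.
move=> hi.
set s := map (rk A) (enum A).
have us : uniq s.
  rewrite map_inj_in_uniq ?enum_uniq // => x y; rewrite !mem_enum; exact: rk_inj.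
have sub : {subset s <= iota 0 #|A|}.
  move=> j /mapP[x]; rewrite mem_enum => xA ->; rewrite mem_iota add0n; exact: rk_lt.
have hsz : size (iota 0 #|A|) <= size s by rewrite size_iota size_map -cardE.
have [_ e] := uniq_min_size us sub hsz.
have : i \in s by rewrite e mem_iota add0n.
by case/mapP=> x; rewrite mem_enum => xA ->; exists x.
Qed.

Lemma rk_ge (A : {set T}) x x' : x' \in A -> rk A x <= rk A x' -> (x == x') || lt x x'.
Proof.
move=> x'A h; case: (eqVneq x x') => //= ne.
case/orP: (lttot ne) => // h2.
by have := rk_mono x'A h2; rewrite ltnNge h.
Qed.

Lemma rk_leS (A : {set T}) x : x \in A ->
  #|[set x' in A | (x' == x) || lt x' x]| = (rk A x).+1.
Proof.
move=> xA; rewrite /rk.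
have -> : [set x' in A | (x' == x) || lt x' x] = x |: [set x' in A | lt x' x].
  apply/setP=> z; rewrite !inE; case: (eqVneq z x) => [->|] //=; by rewrite xA.
by rewrite cardsU1 !inE (negbTE (ltirr x)) andbF.
Qed.

Lemma rk_sub (A : {set T}) m x : rk A x < m -> rk [set x' in A | rk A x' < m] x = rk A x.
Proof.
move=> h; rewrite /rk; apply: eq_card => z; rewrite !inE.
case zA: (z \in A) => //=; case lz: (lt z x) => //=; rewrite ?andbF //.
by rewrite (ltn_trans (rk_mono zA lz) h).
Qed.

End Rank.

Section Ord.
Variables n r : nat.
Local Notation I := (idx n r).

Lemma ltI_irr (x : I) : ~~ ltI x x.
Proof. by rewrite /ltI ltnn eqxx ltnn. Qed.

Lemma ltI_tr (x y z : I) : ltI x y -> ltI y z -> ltI x z.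
Proof.
rewrite /ltI => /orP[h|/andP[/eqP e h]] /orP[h2|/andP[/eqP e2 h2]]; apply/orP.
- by left; lia.
- by left; rewrite -e2.
- by left; rewrite e.
- by right; rewrite e e2 eqxx /= (ltn_trans h h2).
Qed.

Lemma ltI_tot (x y : I) : x != y -> ltI x y || ltI y x.
Proof.
case: x y => [x1 x2] [y1 y2] ne; rewrite /ltI /=.
case: (boolP (x1 < y1)) => h1 //=.
case: (boolP (y1 < x1)) => h2; first by rewrite orbT.
have e1 : x1 = y1 by apply/ord_inj/eqP; rewrite eqn_leq leqNgt h2 leqNgt h1.
subst y1; rewrite eqxx /=.
case: (boolP (x2 < y2)) => g1 //=.
case: (boolP (y2 < x2)) => g2 //.
have e2 : x2 = y2 by apply/ord_inj/eqP; rewrite eqn_leq leqNgt g2 leqNgt g1.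
by move: ne; rewrite e2 eqxx.
Qed.

Definition gtI (x y : I) := ltI y x.
Lemma gtI_irr (x : I) : ~~ gtI x x. Proof. exact: ltI_irr. Qed.
Lemma gtI_tr (x y z : I) : gtI x y -> gtI y z -> gtI x z.
Proof. rewrite /gtI => h1 h2; exact: ltI_tr h2 h1. Qed.
Lemma gtI_tot (x y : I) : x != y -> gtI x y || gtI y x.
Proof. by rewrite /gtI orbC; apply: ltI_tot. Qed.

Lemma rank_lowE (A : {set I}) x : rank_low A x = rk (@ltI n r) A x. Proof. by []. Qed.
Lemma rank_highE (A : {set I}) x : rank_high A x = rk gtI A x. Proof. by []. Qed.

End Ord.

Lemma smallestE n r (A : {set idx n r}) m x :
  (rank_low A x < m)%N -> rank_low (smallest m A) x = rank_low A x.
Proof. exact: (rk_sub (@ltI_irr n r) (@ltI_tr n r)). Qed.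

Lemma largestE n r (A : {set idx n r}) m x :
  (rank_high A x < m)%N -> rank_high (largest m A) x = rank_high A x.
Proof. exact: (rk_sub (@gtI_irr n r) (@gtI_tr n r)). Qed.

Section Main.
Variables (n r d : nat) (a b : idx n r -> nat).
Local Notation I := (idx n r).
Hypothesis ha : forall x, (0 < a x <= d)%N.
Hypothesis hb : forall y, (0 < b y <= d)%N.

Local Notation lo k x := (rank_low (A_ a k) x).
Local Notation hi k y := (rank_high (B_ b k) y).

Lemma lo_lt k x : a x = k -> (lo k x < #|A_ a k|)%N.
Proof. move=> e; apply: (rk_lt (@ltI_irr n r)); by rewrite inE e. Qed.
Lemma hi_lt k y : b y = k -> (hi k y < #|B_ b k|)%N.
Proof. move=> e; apply: (rk_lt (@gtI_irr n r)); by rewrite inE e. Qed.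

Definition MM : {set I * I} :=
  [set p | (a p.1 == b p.2) && (lo (a p.1) p.1 == hi (a p.1) p.2)].

Lemma phiE : phi d a b = MM.
Proof.
apply/setP => -[x y]; rewrite /MM inE /= /phi; apply/bigcupP/idP.
- case=> k _; case: ifP => _; rewrite inE /= => /and3P[hx hy /eqP he].
  + move: hx; rewrite /smallest inE => /andP[]; rewrite inE => /eqP ax hx.
    move: hy; rewrite inE => /eqP by_.
    rewrite smallestE // in he.
    by rewrite ax by_ eqxx he eqxx.
  + move: hy; rewrite /largest inE => /andP[]; rewrite inE => /eqP by_ hy.
    move: hx; rewrite inE => /eqP ax.
    rewrite largestE // in he.
    by rewrite ax by_ eqxx he eqxx.
- case/andP=> /eqP e /eqP he.
  have hk : (a x < d.+1)%N.
    by rewrite ltnS; case/andP: (ha x).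
  exists (Ordinal hk) => //=; case: ifP => _; rewrite inE /=.
  + have hlt : (lo (a x) x < #|B_ b (a x)|)%N.
      by rewrite he; apply: hi_lt; rewrite e.
    by rewrite (smallestE hlt) /smallest !inE eqxx hlt he e !eqxx.
  + have hlt : (hi (a x) y < #|A_ a (a x)|)%N.
      by rewrite -he; apply: lo_lt.
    by rewrite (largestE hlt) /largest !inE eqxx hlt he e !eqxx.
Qed.


Lemma inMM x y : ((x, y) \in MM) = (a x == b y) && (lo (a x) x == hi (a x) y).
Proof. by rewrite inE. Qed.

Lemma A_in x k : (x \in A_ a k) = (a x == k). Proof. by rewrite inE. Qed.
Lemma B_in y k : (y \in B_ b k) = (b y == k). Proof. by rewrite inE. Qed.

Lemma rconf_x : is_rconfig MM -> forall x, exists y, (x, y) \in MM.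
Proof.
case=> h _ x; have /eqP/cards1P[y hy] := h x.
by exists y; move/setP: hy => /(_ y); rewrite !inE eqxx.
Qed.

Lemma rconf_y : is_rconfig MM -> forall y, exists x, (x, y) \in MM.
Proof.
case=> _ h y; have /eqP/cards1P[x hx] := h y.
by exists x; move/setP: hx => /(_ x); rewrite !inE eqxx.
Qed.

Lemma rconf_counts : is_rconfig MM -> forall k, #|A_ a k| = #|B_ b k|.
Proof.
move=> hc k; apply/eqP; rewrite eqn_leq; apply/andP; split.
- case hA: #|A_ a k| => [//|m].
  have [x xA hx] : exists2 x, x \in A_ a k & lo k x = m.
    by apply: (rk_surj (@ltI_irr n r) (@ltI_tr n r) (@ltI_tot n r)); rewrite hA.
  have [y] := rconf_x hc x; rewrite inMM => /andP[/eqP e /eqP he].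
  move: xA; rewrite A_in => /eqP ax; subst k.
  by rewrite -hx he; apply: hi_lt.
- case hB: #|B_ b k| => [//|m].
  have [y yB hy] : exists2 y, y \in B_ b k & hi k y = m.
    by apply: (rk_surj (@gtI_irr n r) (@gtI_tr n r) (@gtI_tot n r)); rewrite hB.
  have [x] := rconf_y hc y; rewrite inMM => /andP[/eqP e /eqP he].
  move: yB; rewrite B_in => /eqP ax; subst k.
  by rewrite -hy -e -he; apply: lo_lt.
Qed.

Lemma counts_rconf : (forall k, #|A_ a k| = #|B_ b k|) -> is_rconfig MM.
Proof.
move=> hc; split.
- move=> x.
  have hx : (lo (a x) x < #|B_ b (a x)|)%N by rewrite -hc; apply: lo_lt.
  have [y yB hy] := rk_surj (@gtI_irr n r) (@gtI_tr n r) (@gtI_tot n r) hx.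
  apply/eqP/cards1P; exists y; apply/setP=> y'; rewrite !inE /=.
  apply/idP/idP.
  + case/andP=> /eqP e /eqP he; apply/eqP.
    apply: (rk_inj (@gtI_irr n r) (@gtI_tr n r) (@gtI_tot n r) (A := B_ b (a x))) => //.
    * by rewrite B_in e.
    * exact: (etrans (esym he) (esym hy)).
  + move/eqP=> ->; move: yB; rewrite B_in => /eqP ->; rewrite eqxx /=; apply/eqP; exact: (esym hy).
- move=> y.
  have hy : (hi (b y) y < #|A_ a (b y)|)%N by rewrite hc; apply: hi_lt.
  have [x xA hx] := rk_surj (@ltI_irr n r) (@ltI_tr n r) (@ltI_tot n r) hy.
  apply/eqP/cards1P; exists x; apply/setP=> x'; rewrite !inE /=.
  apply/idP/idP.
  + case/andP=> /eqP e /eqP he; apply/eqP.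
    apply: (rk_inj (@ltI_irr n r) (@ltI_tr n r) (@ltI_tot n r) (A := A_ a (b y))) => //.
    * by rewrite A_in e.
    * by move: he; rewrite e => he'; exact: (etrans he' (esym hx)).
  + move/eqP=> ->; move: xA; rewrite A_in => /eqP ->; rewrite eqxx /=; apply/eqP; exact: hx.
Qed.

Definition below (p q : I * I) := ltI p.1 q.1 && ltI p.2 q.2.

Lemma ncE p q : noncrossing p q = below p q || below q p.
Proof. by []. Qed.

Lemma below_irr p : ~~ below p p.
Proof. by rewrite /below (negbTE (ltI_irr _)). Qed.

Lemma below_tr p q s : below p q -> below q s -> below p s.
Proof.
case/andP=> h1 h2 /andP[h3 h4]; apply/andP; split; [exact: ltI_tr h1 h3|exact: ltI_tr h2 h4].
Qed.

Lemma below_asym p q : below p q -> ~~ below q p.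
Proof. move=> h; apply/negP=> h2; by have := below_irr p; rewrite (below_tr h h2). Qed.

Lemma MM_lev p : p \in MM -> a p.1 = b p.2.
Proof. by case: p => x y; rewrite inMM => /andP[/eqP]. Qed.

Lemma MM_match1 p q : p \in MM -> q \in MM -> p.1 = q.1 -> p = q.
Proof.
case: p => x y; case: q => x' y' /=; rewrite !inMM => /andP[/eqP e /eqP h] /andP[/eqP e' /eqP h'] ex.
subst x'; congr (_, _).
apply: (rk_inj (@gtI_irr n r) (@gtI_tr n r) (@gtI_tot n r) (A := B_ b (a x))).
- by rewrite B_in e.
- by rewrite B_in e'.
- exact: (etrans (esym h) h').
Qed.

Lemma MM_cross p q : p \in MM -> q \in MM -> a p.1 = a q.1 -> ~~ below p q.
Proof.
case: p => x y; case: q => x' y' /=; rewrite !inMM => /andP[/eqP e /eqP h] /andP[/eqP e' /eqP h'] ex.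
apply/negP; case/andP=> /= l1 l2.
have m1 : (lo (a x) x < lo (a x) x')%N.
  apply: (rk_mono (@ltI_irr n r) (@ltI_tr n r)) l1; by rewrite A_in.
have m2 : (hi (a x) y' < hi (a x) y)%N.
  apply: (rk_mono (@gtI_irr n r) (@gtI_tr n r)) l2; by rewrite B_in -e' ex.
rewrite -ex in h'; rewrite h h' in m1.
by have := ltn_trans m1 m2; rewrite ltnn.
Qed.

Definition PredP := forall p, p \in MM -> (1 < a p.1)%N ->
  exists2 q, q \in MM & below q p && (a q.1 == (a p.1).-1).


Lemma bigmax_att (T : finType) (P : pred T) (F : T -> nat) :
  (0 < \max_(i | P i) F i)%N -> exists2 i, P i & F i = \max_(i | P i) F i.
Proof.
case: (pickP P) => [i0 Pi0|hn].
  move=> _; rewrite (bigmax_eq_arg i0 Pi0).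
  by exists [arg max_(i > i0 | P i) F i] => //; case: arg_maxnP.
by rewrite big_pred0.
Qed.

Lemma ncP (F : {set I * I}) u v (S : {set I * I}) : nc_chain F u v S ->
  [/\ S \subset F, (u, v) \in S,
      (forall p q, p \in S -> q \in S -> p != q -> below p q || below q p) &
      (forall p, p \in S -> leI p.1 u && leI p.2 v)].
Proof.
case/and4P=> h1 h2 /forall_inP h3 /forall_inP h4; split => //.
- move=> p q pS qS ne; have /forall_inP := h3 p pS; move/(_ q qS); by rewrite ne.
Qed.

Lemma ncP2 (F : {set I * I}) u v (S : {set I * I}) : S \subset F -> (u, v) \in S ->
  (forall p q, p \in S -> q \in S -> p != q -> below p q || below q p) ->
  (forall p, p \in S -> leI p.1 u && leI p.2 v) -> nc_chain F u v S.
Proof.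
move=> h1 h2 h3 h4; apply/and4P; split => //.
- apply/forall_inP=> p pS; apply/forall_inP=> q qS; apply/implyP; exact: h3.
- by apply/forall_inP.
Qed.

Lemma bigmax_ge (T : finType) (P : pred T) (F : T -> nat) i m :
  P i -> (m <= F i)%N -> (m <= \max_(i | P i) F i)%N.
Proof. move=> Pi h; exact: leq_trans h (leq_bigmax_cond _ Pi). Qed.

Lemma MaxAtt u : (0 < Phi_a MM u)%N ->
  exists v, exists2 S, (u, v) \in MM /\ nc_chain MM u v S & #|S| = Phi_a MM u.
Proof.
move=> h; rewrite /Phi_a in h *; have [v uvM e] := bigmax_att h.
rewrite -e in h; have [S hS e'] := bigmax_att h.
by exists v, S => //; rewrite e' e.
Qed.

Lemma MaxBnd u v (S : {set I * I}) : (u, v) \in MM -> nc_chain MM u v S -> (#|S| <= Phi_a MM u)%N.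
Proof.
move=> uvM hS; rewrite /Phi_a; apply: (bigmax_ge (i := v)) => //.
exact: (bigmax_ge (i := S)).
Qed.

Lemma chain_below' u v (S : {set I * I}) p : nc_chain MM u v S -> p \in S -> p != (u, v) -> below p (u, v).
Proof.
case/ncP=> _ uvS hnc hle pS ne.
case/orP: (hnc _ _ pS uvS ne) => // /andP[/= l1 _].
have /andP[h _] := hle p pS; move: h; rewrite /leI => /orP[/eqP e|l2].
  by move: l1; rewrite -e (negbTE (ltI_irr _)).
by have := ltI_irr u; rewrite (ltI_tr l1 l2).
Qed.

Definition mes (x : I) := rk (@ltI n r) setT x.

Lemma pred_from_Phi : Phi_a MM =1 a -> PredP.
Proof.
move=> hPa p pM h1.
have h0 : (0 < Phi_a MM p.1)%N by rewrite hPa; lia.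
have [v [S [uvM hS] hcS]] := MaxAtt h0.
have ev : v = p.2 by have := MM_match1 uvM pM erefl => /(congr1 snd).
subst v; rewrite hPa in hcS.
have [sub pS hnc hle] := ncP hS; rewrite -surjective_pairing in pS.
set S' := S :\ p.
have cS' : #|S'| = (a p.1).-1.
  by rewrite /S'; have := cardsD1 p S; rewrite pS hcS /= => hh; lia.
have [q0 q0S'] : exists q0, q0 \in S'.
  apply/set0Pn; rewrite -card_gt0 cS'; lia.
case: (@arg_maxnP _ q0 (mem S') (fun q => mes q.1) q0S') => q qS' qmax.
have qS : q \in S by move: qS'; rewrite !inE => /andP[].
have qp : q != p by move: qS'; rewrite !inE => /andP[].
have qM : q \in MM by exact: (subsetP sub).
have bqp : below q p.
  by rewrite [p]surjective_pairing; apply: chain_below' hS qS _; rewrite -surjective_pairing.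
have hS' : nc_chain MM q.1 q.2 S'.
{ apply: ncP2.
  - by apply: subset_trans sub; apply: subsetDl.
  - by rewrite -surjective_pairing.
  - move=> s t; rewrite !inE => /andP[_ sS] /andP[_ tS]; exact: hnc.
  - move=> s sS'; case: (eqVneq s q) => [->|ne]; first by rewrite /leI !eqxx.
    have sS : s \in S by move: sS'; rewrite !inE => /andP[].
    case/orP: (hnc _ _ sS qS ne) => [/andP[l1 l2]|/andP[l1 _]].
      by rewrite /leI l1 l2 !orbT.
    have := qmax s sS'; rewrite /= leqNgt.
    by rewrite /mes (rk_mono (@ltI_irr n r) (@ltI_tr n r) _ l1) // inE. }
have le1 : ((a p.1).-1 <= a q.1)%N.
  by rewrite -cS' -hPa; apply: MaxBnd hS'; rewrite -surjective_pairing.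
have hq0 : (0 < Phi_a MM q.1)%N by rewrite hPa; case/andP: (ha q.1).
have [v' [Sq [qvM hSq] hcSq]] := MaxAtt hq0.
have ev' : v' = q.2 by have := MM_match1 qvM qM erefl => /(congr1 snd).
subst v'; rewrite hPa in hcSq.
have [subq qSq hncq hleq] := ncP hSq.
have bS : forall s, s \in Sq -> below s p.
  move=> s sS; case: (eqVneq s q) => [->//|ne].
  apply: below_tr bqp; rewrite [q]surjective_pairing; apply: chain_below' hSq sS _.
  by rewrite -surjective_pairing.
have pSq : p \notin Sq by apply/negP=> /bS; rewrite (negbTE (below_irr _)).
have hT : nc_chain MM p.1 p.2 (p |: Sq).
{ apply: ncP2.
  - by rewrite subUset sub1set pM subq.
  - by rewrite -surjective_pairing !inE eqxx.
  - move=> s t; rewrite !inE => /orP[/eqP->|sS] /orP[/eqP->|tS] ne.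
    + by rewrite eqxx in ne.
    + by rewrite (bS _ tS) orbT.
    + by rewrite (bS _ sS).
    + exact: hncq.
  - move=> s; rewrite !inE => /orP[/eqP->|/bS /andP[l1 l2]]; first by rewrite /leI !eqxx.
    by rewrite /leI l1 l2 !orbT. }
have le2 : (#|p |: Sq| <= a p.1)%N.
  by rewrite -hPa; apply: MaxBnd hT; rewrite -surjective_pairing.
rewrite cardsU1 pSq hcSq /= in le2.
exists q; first exact: qM.
rewrite bqp /=; move: le1 le2 h1 => l1 l2 l3.
rewrite eqn_leq l1 andbT -ltnS prednK; first by rewrite add1n in l2.
exact: ltn_trans _ l3.
Qed.

Hypothesis hP : PredP.

Lemma descend m j q : q \in MM -> (0 < j)%N -> a q.1 = j + m ->
  exists2 q', q' \in MM & (a q'.1 == j) && ((q' == q) || below q' q).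
Proof.
elim: m q => [|m IH] q qM j0 e.
  by exists q => //; rewrite e addn0 !eqxx.
have h1 : (1 < a q.1)%N by rewrite e; lia.
have [q0 q0M /andP[bq /eqP e0]] := hP qM h1.
have h2 : a q0.1 = j + m by rewrite e0 e; lia.
have [q' q'M /andP[e' h']] := IH q0 q0M j0 h2.
exists q' => //; rewrite e' /=; apply/orP; right.
case/orP: h' => [/eqP->//|]; move=> h'; exact: below_tr h' bq.
Qed.

Lemma level_lt p q : p \in MM -> q \in MM -> below q p -> (a q.1 < a p.1)%N.
Proof.
move=> pM qM bqp; rewrite ltnNge; apply/negP => le.
have j0 : (0 < a p.1)%N by case/andP: (ha p.1).
have h3 : a q.1 = a p.1 + (a q.1 - a p.1) by lia.
have [q' q'M /andP[/eqP e' h']] := descend qM j0 h3.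
have bq'p : below q' p by case/orP: h' => [/eqP->//|h']; exact: below_tr h' bqp.
by have := MM_cross q'M pM e'; rewrite bq'p.
Qed.

Lemma chain_below u v (S : {set I * I}) p : nc_chain MM u v S -> p \in S -> p != (u, v) -> below p (u, v).
Proof.
case/ncP=> _ uvS hnc hle pS ne.
case/orP: (hnc _ _ pS uvS ne) => // /andP[/= l1 _].
have /andP[h _] := hle p pS; move: h; rewrite /leI => /orP[/eqP e|l2].
  by move: l1; rewrite -e (negbTE (ltI_irr _)).
by have := ltI_irr u; rewrite (ltI_tr l1 l2).
Qed.

Lemma chain_bound u v (S : {set I * I}) : (u, v) \in MM -> nc_chain MM u v S -> (#|S| <= a u)%N.
Proof.
move=> uvM hS; have [sub uvS hnc hle] := ncP hS.
have sM : forall s, s \in S -> s \in MM by move=> s sS; exact: (subsetP sub).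
rewrite cardE -(size_map (fun s => a s.1)) -[X in (_ <= X)%N](size_iota 1).
apply: uniq_leq_size.
  rewrite map_inj_in_uniq ?enum_uniq // => p q; rewrite !mem_enum => pS qS e.
  apply/eqP/negPn/negP=> ne; case/orP: (hnc _ _ pS qS ne) => bl.
    by have := MM_cross (sM _ pS) (sM _ qS) e; rewrite bl.
  by have := MM_cross (sM _ qS) (sM _ pS) (esym e); rewrite bl.
move=> k /mapP[s]; rewrite mem_enum => sS ->; rewrite mem_iota.
have := ha s.1; case/andP=> -> _ /=; rewrite addnC addn1 ltnS.
case: (eqVneq s (u, v)) => [->//|ne].
exact: ltnW (level_lt uvM (sM _ sS) (chain_below hS sS ne)).
Qed.

Lemma chain_exists k p : p \in MM -> a p.1 = k.+1 ->
  exists S : {set I * I}, [/\ S \subset MM, p \in S,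
      (forall s t, s \in S -> t \in S -> s != t -> below s t || below t s),
      (forall s, s \in S -> (s == p) || below s p) & #|S| = k.+1].
Proof.
elim: k p => [|k IH] p pM e.
{ exists [set p]; split.
  - by rewrite sub1set.
  - by rewrite inE.
  - by move=> s t; rewrite !inE => /eqP-> /eqP->; rewrite eqxx.
  - by move=> s; rewrite inE => ->.
  - by rewrite cards1. }
have h1 : (1 < a p.1)%N by rewrite e.
have [q qM /andP[bqp /eqP eq]] := hP pM h1.
have eq' : a q.1 = k.+1 by rewrite eq e.
have [S' [sub qS hnc hbs hc]] := IH q qM eq'.
have bS : forall s, s \in S' -> below s p.
  by move=> s /hbs /orP[/eqP->//|h]; exact: below_tr h bqp.
have pS' : p \notin S'.
  by apply/negP=> /bS; rewrite (negbTE (below_irr _)).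
exists (p |: S'); split.
- by rewrite subUset sub1set pM sub.
- by rewrite !inE eqxx.
- move=> s t; rewrite !inE => /orP[/eqP->|sS] /orP[/eqP->|tS] ne.
  + by rewrite eqxx in ne.
  + by rewrite (bS _ tS) orbT.
  + by rewrite (bS _ sS).
  + exact: hnc.
- by move=> s; rewrite !inE => /orP[->//|/bS->]; rewrite orbT.
- by rewrite cardsU1 pS' hc.
Qed.

Lemma chain_exists2 p : p \in MM -> exists2 S, nc_chain MM p.1 p.2 S & #|S| = a p.1.
Proof.
move=> pM; have := ha p.1; case e: (a p.1) => [//|k] _.
have [S [sub pS hnc hbs hc]] := chain_exists pM e.
exists S => //; apply: ncP2 => //.
- by rewrite -surjective_pairing.
- move=> s /hbs /orP[/eqP->|/andP[l1 l2]]; first by rewrite /leI !eqxx.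
  by rewrite /leI l1 l2 !orbT.
Qed.

Lemma Phi_a_eq : is_rconfig MM -> Phi_a MM =1 a.
Proof.
move=> hc u; have [v uvM] := rconf_x hc u.
apply/eqP; rewrite eqn_leq; apply/andP; split.
- apply/bigmax_leqP => v' uv'M; apply/bigmax_leqP => S hS; exact: chain_bound uv'M hS.
- have [S hS hcS] := chain_exists2 uvM.
  apply: (bigmax_ge (i := v)) => //; rewrite /= in hS hcS.
  by rewrite -hcS; apply: (bigmax_ge (i := S)).
Qed.

Lemma Phi_b_eq : is_rconfig MM -> Phi_b MM =1 b.
Proof.
move=> hc v; have [u uvM] := rconf_y hc v.
have e := MM_lev uvM; rewrite /= in e.
apply/eqP; rewrite eqn_leq; apply/andP; split.
- apply/bigmax_leqP => u' u'vM; apply/bigmax_leqP => S hS.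
  by rewrite -(MM_lev u'vM); exact: chain_bound u'vM hS.
- have [S hS hcS] := chain_exists2 uvM.
  apply: (bigmax_ge (i := u)) => //; rewrite /= in hS hcS.
  by rewrite -e -hcS; apply: (bigmax_ge (i := S)).
Qed.

End Main.

Section Main2.
Variables (n r d : nat) (a b : idx n r -> nat).
Local Notation I := (idx n r).
Hypothesis ha : forall x, (0 < a x <= d)%N.
Hypothesis hb : forall y, (0 < b y <= d)%N.
Local Notation lo k x := (rank_low (A_ a k) x).
Local Notation hi k y := (rank_high (B_ b k) y).

Lemma kkE u : kk a u = (lo (a u) u).+1.
Proof.
rewrite -(rk_leS (@ltI_irr n r) (A := A_ a (a u))); last by rewrite A_in.
rewrite /kk; apply: eq_card => x; rewrite !inE /leI; by rewrite andbC.
Qed.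

Lemma jthE c j y : jth_to_last b c j y = (b y == c) && ((hi c y).+1 == j).
Proof.
rewrite /jth_to_last; case e: (b y == c) => //=.
rewrite -(rk_leS (@gtI_irr n r) (A := B_ b c)); last by rewrite B_in.
congr (_ == _); apply: eq_card => z; rewrite !inE /leI /gtI; by rewrite andbC (eq_sym y).
Qed.

Lemma C_counts_ge2 : condC a b -> forall k, (1 < k)%N -> (#|A_ a k| <= #|B_ b k|)%N.
Proof.
move=> hC k k1; case hA: #|A_ a k| => [//|m].
have [u uA hu] : exists2 u, u \in A_ a k & lo k u = m.
  by apply: (rk_surj (@ltI_irr n r) (@ltI_tr n r) (@ltI_tot n r)); rewrite hA.
move: uA; rewrite A_in => /eqP au; subst k.
have [_ _ h _] := hC u k1.
by rewrite kkE hu in h.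
Qed.

Lemma C_counts : in_Wstar d a b -> condC a b -> forall k, #|A_ a k| = #|B_ b k|.
Proof.
move=> [_ [_ [pi hpi]]] hC.
have ge : forall j : 'I_d, (j <= pi j)%N.
  move=> j; case: (posnP j) => [->//|j0].
  have j1 : (1 < j.+1)%N by rewrite ltnS.
  have h := C_counts_ge2 hC j1.
  have := hpi j; move: h; rewrite /A_ /B_.
  move: #|_| #|_| => x y; lia.
have sumE : (\sum_(j < d) (j : nat) = \sum_(j < d) (pi j : nat))%N.
  by rewrite (reindex_inj (@perm_inj _ pi)).
have eqj : forall j : 'I_d, (j : nat) = pi j.
  have := @leqif_sum 'I_d xpredT (fun j : 'I_d => (j : nat) == pi j) (fun j : 'I_d => (j : nat)) (fun j : 'I_d => (pi j : nat)) (fun j _ => leqif_eq (ge j)).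
  case=> _.
  rewrite sumE eqxx => /esym /forallP h j; exact/eqP/h.
move=> k.
case: (posnP k) => [->|k0].
  have -> : A_ a 0 = set0 by apply/setP=> x; rewrite !inE; have := ha x; case: (a x).
  have -> : B_ b 0 = set0 by apply/setP=> x; rewrite !inE; have := hb x; case: (b x).
  done.
case: (leqP k d) => kd; last first.
  have -> : A_ a k = set0.
    apply/setP=> x; rewrite !inE; apply/negP=> /eqP e; have := ha x; rewrite e; lia.
  have -> : B_ b k = set0.
    apply/setP=> x; rewrite !inE; apply/negP=> /eqP e; have := hb x; rewrite e; lia.
  done.
have kj : (k.-1 < d)%N by lia.
have := hpi (Ordinal kj); rewrite -(eqj (Ordinal kj)) /= prednK // /A_ /B_.
move: #|_| #|_| => x y; lia.
Qed.

Hypothesis hc : forall k, #|A_ a k| = #|B_ b k|.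

Lemma pred_C : PredP a b -> condC a b.
Proof.
move=> hP u k1.
have hc' := counts_rconf hc; have [v uvM] := rconf_x hc' u.
have [q qM /andP[/andP[/= lq1 lq2] /eqP eq]] := hP (u, v) uvM k1.
have qMM := qM; rewrite [q]surjective_pairing inMM in qMM.
case/andP: qMM => /eqP eqb /eqP eqr.
have Lpos : (0 < ll a u)%N.
  rewrite card_gt0; apply/set0Pn; exists q.1; rewrite !inE /leI lq1 orbT eq eqxx //.
have LA : (ll a u <= #|A_ a (a u).-1|)%N.
  apply: subset_leq_card; apply/subsetP=> x; rewrite !inE => /andP[_ ->] //.
have KA : (kk a u <= #|A_ a (a u)|)%N.
  apply: subset_leq_card; apply/subsetP=> x; rewrite !inE => /andP[_ ->] //.
have LB : (ll a u).-1 < #|B_ b (a u).-1| by rewrite -hc; lia.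
have [y1 y1B hy1] := rk_surj (@gtI_irr n r) (@gtI_tr n r) (@gtI_tot n r) LB.
have hy1' : hi (a u).-1 y1 = (ll a u).-1 := hy1.
rewrite eq in eqr.
have loq : (lo (a u).-1 q.1 < ll a u)%N.
  apply: proper_card; apply/properP; split.
    apply/subsetP=> x; rewrite !inE => /andP[xa lx]; rewrite xa andbT /leI.
    by rewrite (ltI_tr lx lq1) orbT.
  exists q.1; first by rewrite !inE /leI lq1 orbT eq eqxx.
  by rewrite !inE (negbTE (ltI_irr _)) andbF.
have hq2 : (hi (a u).-1 q.2 <= hi (a u).-1 y1)%N.
  by rewrite hy1' -eqr; move: loq Lpos; move: (ll a u) => L; lia.
have := rk_ge (@gtI_irr n r) (@gtI_tr n r) (@gtI_tot n r) y1B hq2.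
case/orP=> [/eqP e12|l12].
{ subst y1 => {hq2}.
  split => //; first by rewrite -hc.
  - by rewrite -hc.
  - exists q.2, v; rewrite !jthE lq2 andbT; apply/andP; split.
      rewrite -eqb eq eqxx /=; rewrite hy1'; move: Lpos; move: (ll a u) => L; lia.
    rewrite -(MM_lev uvM) eqxx /= kkE; apply/eqP; congr S.
    by move: uvM; rewrite inMM => /andP[_ /eqP]. }
split => //; first by rewrite -hc.
- by rewrite -hc.
- exists y1, v; rewrite !jthE; apply/and3P; split.
  + move: y1B; rewrite B_in => ->; rewrite /=; rewrite hy1'; move: Lpos; move: (ll a u) => L; lia.
  + rewrite -(MM_lev uvM) eqxx /= kkE; apply/eqP; congr S.
    by move: uvM; rewrite inMM => /andP[_ /eqP].
  + exact: ltI_tr l12 lq2.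
Qed.

Lemma C_pred : condC a b -> PredP a b.
Proof.
move=> hC [u v] uvM k1; rewrite /= in k1 *.
have hc' := counts_rconf hc.
have [Lpos LB KB [y1 [y2 /and3P[j1 j2 l12]]]] := hC u k1.
rewrite jthE in j1; rewrite jthE in j2.
case/andP: j1 => /eqP by1 /eqP hy1; case/andP: j2 => /eqP by2 /eqP hy2.
have := uvM; rewrite inMM => /andP[/eqP eav /eqP luv].
have ey : y2 = v.
{ apply: (rk_inj (@gtI_irr n r) (@gtI_tr n r) (@gtI_tot n r) (A := B_ b (a u))).
  - by rewrite B_in by2.
  - by rewrite B_in eav.
  - have : (hi (a u) y2).+1 = (hi (a u) v).+1 by rewrite hy2 kkE luv.
    by case. }
subst y2.
have [x1 x1M] := rconf_y hc' y1.
have := x1M; rewrite inMM => /andP[/eqP ea1 /eqP l1].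
rewrite ea1 by1 in l1.
have lx : ltI x1 u.
  have ne : x1 != u by apply/negP=> /eqP e; move: ea1; rewrite e by1; lia.
  case/orP: (ltI_tot ne) => // lux.
  have : (ll a u <= lo (a u).-1 x1)%N.
    apply: subset_leq_card; apply/subsetP=> x; rewrite !inE => /andP[lxu ->] /=.
    move: lxu; rewrite /leI => /orP[/eqP->//|h]; exact: ltI_tr h lux.
  rewrite l1 -hy1 /=; lia.
exists (x1, y1) => //; by rewrite /below /= lx l12 ea1 by1 eqxx.
Qed.

End Main2.

Theorem lemma8 (n r d : nat) (hn : (0 < n)%N) (hr : (0 < r)%N) (hd : (0 < d)%N)
  (a b : idx n r -> nat) (hw : in_Wstar d a b) :
  (is_rconfig (phi d a b) /\ Phi_a (phi d a b) =1 a /\ Phi_b (phi d a b) =1 b)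
  <-> condC a b.
Proof.
have [ha [hb _]] := hw.
rewrite (phiE b ha); split.
- case=> hrc [hPa _].
  exact: (pred_C (rconf_counts hrc) (pred_from_Phi ha hPa)).
- move=> hC.
  have hc := C_counts ha hb hw hC.
  have hrc := counts_rconf hc.
  have hP := C_pred hc hC.
  split; first exact: hrc.
  split; [exact: (Phi_a_eq ha hP hrc) | exact: (Phi_b_eq ha hP hrc)].
Qed.
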